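(* Let $M\ge 1$ be an integer, $\Delta x>0$, and consider the cells $C_j=[x_{j-\frac12},x_{j+\frac12}]$ with centers $x_j=j\Delta x$, $j\in\{-M,\dots,M\}$. Let $H:[0,\infty)\to\mathbb{R}$ be differentiable, let $V:\mathbb{R}\to\mathbb{R}$, and let $(W_k)_{k\in\{-2M,\dots,2M\}}$ be real numbers (approximations of the interaction potential $W$). Suppose the cell averages $\overline\rho_j\ge 0$, $j\in\{-M,\dots,M\}$, are given at time $t$, and define: \begin{itemize} \item slopes $(\rho_x)_j\in\mathbb{R}$ and point values $\rho_j^{\rm E}=\overline\rho_j+\frac{\Delta x}{2}(\rho_x)_j$, $\rho_j^{\rm W}=\overline\rho_j-\frac{\Delta x}{2}(\rho_x)_j$, where the slopes are chosen so that $\rho_j^{\rm E}\ge0$ and $\rho_j^{\rm W}\ge0$ for all $j$ (a positivity preserving piecewise linear reconstruction); \item $\xi_j=\Delta x\sum_{i=-M}^{M}W_{j-i}\overline\rho_i+H'(\overline\rho_j)+V(x_j)$; \item $u_{j+\frac12}=-\frac{\xi_{j+1}-\xi_j}{\Delta x}$, $u_{j+\frac12}^+=\max(u_{j+\frac12},0)$, $u_{j+\frac12}^-=\min(u_{j+\frac12},0)$ for $j=-M,\dots,M-1$; \item fluxes $F_{j+\frac12}=u_{j+\frac12}^+\rho_j^{\rm E}+u_{j+\frac12}^-\rho_{j+1}^{\rm W}$ for $j=-M,\dots,M-1$, and $F_{-M-\frac12}=F_{M+\frac12}=0$. \end{itemize} Let $\Delta t>0$ and define the forward Euler update $\overline\rho_j(t+\Delta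 t)=\overline\rho_j-\frac{\Delta t}{\Delta x}\big(F_{j+\frac12}-F_{j-\frac12}\big)$. If \[ \Delta t\le\frac{\Delta x}{2a},\qquad a=\max_{j}\big\{u_{j+\frac12}^+,\,-u_{j+\frac12}^-\big\}, \] then $\overline\rho_j(t+\Delta t)\ge0$ for all $j$. Consequently, starting from nonnegative initial cell averages and choosing every time step according to this CFL condition (computed from the current values), all computed cell averages remain nonnegative.
   Context: This is the one-dimensional semi-discrete finite-volume scheme $\frac{d\overline\rho_j}{dt}=-\frac{F_{j+\frac12}-F_{j-\frac12}}{\Delta x}$ for the equation $\rho_t=\partial_x\big[\rho\,\partial_x\big(H'(\rho)+V(x)+W*\rho\big)\big]$ with $\rho_0\ge0$, discretized in time by the forward Euler method. In the paper the slopes are first taken as centered differences $(\overline\rho_{j+1}-\overline\rho_{j-1})/(2\Delta x)$ and, if a point value becomes negative, recomputed with the generalized minmod limiter; this is one example of a positivity preserving reconstruction. *)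

(* Defs.v *)
From Stdlib Require Import Reals Lra ZArith List.
Open Scope R_scope.

Definition in_cells (M : nat) (j : Z) : Prop :=
  (- Z.of_nat M <= j <= Z.of_nat M)%Z.

(* H : [0,oo) -> R is differentiable with derivative Hd (one-sided at 0):
   only values H r with r >= 0 are used. *)
Definition deriv_nonneg (H Hd : R -> R) : Prop :=
  forall r, 0 <= r -> forall eps, 0 < eps -> exists delta, 0 < delta /\
    forall h, h <> 0 -> 0 <= r + h -> Rabs h < delta ->
      Rabs ((H (r + h) - H r) / h - Hd r) < eps.

Definition xc (dx : R) (j : Z) : R := IZR j * dx.

Definition rhoE (dx : R) (rho s : Z -> R) (j : Z) : R := rho j + dx / 2 * s j.
Definition rhoW (dx : R) (rho s : Z -> R) (j : Z) : R := rho j - dx / 2 * s j.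

Definition conv (M : nat) (dx : R) (W rho : Z -> R) (j : Z) : R :=
  dx * sum_f_R0 (fun k => W (j - (Z.of_nat k - Z.of_nat M))%Z
                          * rho (Z.of_nat k - Z.of_nat M)%Z) (2 * M).

Definition xi (M : nat) (dx : R) (Hd V : R -> R) (W rho : Z -> R) (j : Z) : R :=
  conv M dx W rho j + Hd (rho j) + V (xc dx j).

Definition uface (M : nat) (dx : R) (Hd V : R -> R) (W rho : Z -> R) (j : Z) : R :=
  - (xi M dx Hd V W rho (j + 1) - xi M dx Hd V W rho j) / dx.

(* F_{j+1/2}; zero outside j = -M..M-1, in particular F_{-M-1/2} = F_{M+1/2} = 0 *)
Definition flux (M : nat) (dx : R) (Hd V : R -> R) (W rho s : Z -> R) (j : Z) : R :=
  if (Z.leb (- Z.of_nat M) j && Z.ltb j (Z.of_nat M))%bool then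
    Rmax (uface M dx Hd V W rho j) 0 * rhoE dx rho s j
    + Rmin (uface M dx Hd V W rho j) 0 * rhoW dx rho s (j + 1)
  else 0.

Definition euler (M : nat) (dx : R) (Hd V : R -> R) (W rho s : Z -> R) (dt : R)
  (j : Z) : R :=
  rho j - dt / dx * (flux M dx Hd V W rho s j - flux M dx Hd V W rho s (j - 1)).

Definition amax (M : nat) (dx : R) (Hd V : R -> R) (W rho : Z -> R) : R :=
  fold_right Rmax 0
    (map (fun k => let j := (Z.of_nat k - Z.of_nat M)%Z in
                   Rmax (Rmax (uface M dx Hd V W rho j) 0)
                        (- Rmin (uface M dx Hd V W rho j) 0))
         (seq 0 (2 * M))).

(* Main.v *)
Require Import Defs.
From Stdlib Require Import Reals Lra ZArith List Lia.
Open Scope R_scope.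

Lemma fold_max_in (l : list R) x : In x l -> x <= fold_right Rmax 0 l.
Proof.
  induction l as [|y l IH]; simpl; [tauto|].
  intros [<-|H]; [apply Rmax_l|]. eapply Rle_trans; [apply IH; auto|apply Rmax_r].
Qed.

Lemma amax_bound M dx Hd V W rho j :
  (- Z.of_nat M <= j < Z.of_nat M)%Z ->
  Rmax (uface M dx Hd V W rho j) 0 <= amax M dx Hd V W rho /\
  - Rmin (uface M dx Hd V W rho j) 0 <= amax M dx Hd V W rho.
Proof.
  intros Hj.
  assert (Hin : In (Rmax (Rmax (uface M dx Hd V W rho j) 0)
                        (- Rmin (uface M dx Hd V W rho j) 0))
                   (map (fun k => let j := (Z.of_nat k - Z.of_nat M)%Z in
                   Rmax (Rmax (uface M dx Hd V W rho j) 0)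
                        (- Rmin (uface M dx Hd V W rho j) 0))
         (seq 0 (2 * M)))).
  { apply in_map_iff. exists (Z.to_nat (j + Z.of_nat M)). split.
    - simpl. replace (Z.of_nat (Z.to_nat (j + Z.of_nat M)) - Z.of_nat M)%Z with j by lia.
      reflexivity.
    - apply in_seq. lia. }
  apply fold_max_in in Hin. unfold amax.
  split; (eapply Rle_trans; [|exact Hin]); [apply Rmax_l|apply Rmax_r].
Qed.

Lemma step M dx Hd V W rho s dt :
  0 < dx ->
  (forall j, in_cells M j -> 0 <= rhoE dx rho s j /\ 0 <= rhoW dx rho s j) ->
  0 < dt -> 2 * amax M dx Hd V W rho * dt <= dx ->
  forall j, in_cells M j -> 0 <= euler M dx Hd V W rho s dt j.
Proof.
  intros Hdx Hpos Hdt Hcfl j Hj.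
  unfold in_cells in Hj.
  set (lam := dt / dx).
  assert (Hlam : 0 < lam) by (unfold lam; apply Rdiv_lt_0_compat; lra).
  destruct (Hpos j) as [HE HW]; [unfold in_cells; lia|].
  assert (A : lam * flux M dx Hd V W rho s j <= rhoE dx rho s j / 2).
  { unfold flux.
    destruct ((- Z.of_nat M <=? j)%Z && (j <? Z.of_nat M)%Z)%bool eqn:Hc.
    - apply Bool.andb_true_iff in Hc as [H1 H2].
      apply Z.leb_le in H1. apply Z.ltb_lt in H2.
      destruct (amax_bound M dx Hd V W rho j) as [B1 _]; [lia|].
      destruct (Hpos (j+1)%Z) as [_ HW1]; [unfold in_cells; lia|].
      set (u := uface M dx Hd V W rho j) in *.
      assert (Hm : Rmin u 0 <= 0) by apply Rmin_r.
      assert (Hp : 0 <= Rmax u 0) by apply Rmax_r.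
      assert (Hk : lam * Rmax u 0 <= 1/2).
      { assert (Hdd : dt * Rmax u 0 <= dx / 2) by nra.
        unfold lam. replace (dt / dx * Rmax u 0) with ((dt * Rmax u 0) * / dx) by (field; lra).
        replace (1/2) with ((dx/2) * / dx) by (field; lra).
        apply Rmult_le_compat_r; [apply Rlt_le, Rinv_0_lt_compat; lra|exact Hdd]. }
      assert (X1 : lam * Rmax u 0 * rhoE dx rho s j <= 1/2 * rhoE dx rho s j)
        by (apply Rmult_le_compat_r; auto).
      assert (X2 : lam * Rmin u 0 * rhoW dx rho s (j+1) <= 0).
      { assert (0 <= lam * - Rmin u 0) by (apply Rmult_le_pos; lra). nra. }
      nra.
    - rewrite Rmult_0_r. lra. }
  assert (B : - (rhoW dx rho s j / 2) <= lam * flux M dx Hd V W rho s (j - 1)).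
  { unfold flux.
    destruct ((- Z.of_nat M <=? j - 1)%Z && (j - 1 <? Z.of_nat M)%Z)%bool eqn:Hc.
    - apply Bool.andb_true_iff in Hc as [H1 H2].
      apply Z.leb_le in H1. apply Z.ltb_lt in H2.
      destruct (amax_bound M dx Hd V W rho (j-1)) as [_ B2]; [lia|].
      destruct (Hpos (j-1)%Z) as [HE1 _]; [unfold in_cells; lia|].
      replace (j - 1 + 1)%Z with j by lia.
      set (u := uface M dx Hd V W rho (j-1)) in *.
      assert (Hm : Rmin u 0 <= 0) by apply Rmin_r.
      assert (Hp : 0 <= Rmax u 0) by apply Rmax_r.
      assert (Hk : - (lam * Rmin u 0) <= 1/2).
      { assert (Hdd : dt * (- Rmin u 0) <= dx / 2) by nra.
        unfold lam. replace (- (dt / dx * Rmin u 0)) with ((dt * - Rmin u 0) * / dx) by (field; lra).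
        replace (1/2) with ((dx/2) * / dx) by (field; lra).
        apply Rmult_le_compat_r; [apply Rlt_le, Rinv_0_lt_compat; lra|exact Hdd]. }
      assert (X1 : - (lam * Rmin u 0) * rhoW dx rho s j <= 1/2 * rhoW dx rho s j)
        by (apply Rmult_le_compat_r; auto).
      assert (X2 : 0 <= lam * Rmax u 0 * rhoE dx rho s (j-1)).
      { apply Rmult_le_pos; auto. apply Rmult_le_pos; lra. }
      nra.
    - rewrite Rmult_0_r. lra. }
  unfold euler. fold lam.
  unfold rhoE, rhoW in A, B. lra.
Qed.

Theorem theorem2p1 (M : nat) (dx : R) (H Hd V : R -> R) (W : Z -> R) :
  (1 <= M)%nat -> 0 < dx -> deriv_nonneg H Hd ->
  (* one forward Euler step *)
  (forall (rho s : Z -> R) (dt : R),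
     (forall j, in_cells M j -> 0 <= rho j) ->
     (forall j, in_cells M j -> 0 <= rhoE dx rho s j /\ 0 <= rhoW dx rho s j) ->
     0 < dt ->
     2 * amax M dx Hd V W rho * dt <= dx ->
     forall j, in_cells M j -> 0 <= euler M dx Hd V W rho s dt j)
  /\
  (* iterating with the CFL condition at every step *)
  (forall (rho s : nat -> Z -> R) (dt : nat -> R),
     (forall j, in_cells M j -> 0 <= rho O j) ->
     (forall n j, in_cells M j ->
        0 <= rhoE dx (rho n) (s n) j /\ 0 <= rhoW dx (rho n) (s n) j) ->
     (forall n, 0 < dt n) ->
     (forall n, 2 * amax M dx Hd V W (rho n) * dt n <= dx) ->
     (forall n j, in_cells M j ->
        rho (S n) j = euler M dx Hd V W (rho n) (s n) (dt n) j) ->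
     forall n j, in_cells M j -> 0 <= rho n j).
Proof.
  intros _ Hdx _. split.
  - intros rho s dt _ Hp Hdt Hc. apply step; auto.
  - intros rho s dt H0 Hp Hdt Hc Hu n. induction n as [|n IH]; auto.
    intros j Hj. rewrite Hu by auto. apply step; auto.
Qed.
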